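(* Let $\hat{\mathbf Q}=\tilde{\mathbf Q}_{st}+\tilde{\mathbf Q}_{\mathcal I}\varepsilon$ be an $n\times n$ dual quaternion Hermitian matrix and $\epsilon>0$. Then Algorithm 1 applied to $\hat{\mathbf Q}$ with accuracy $\epsilon$ terminates after $T$ iterations, where $T$ is bounded by a fixed positive integer, and the final iterate satisfies $r^{(T)}<\epsilon$. Moreover, if $\mu_1\ge\mu_2\ge\cdots\ge\mu_n$ are the eigenvalues of $\tilde{\mathbf Q}_{st}$ and $d_1\ge d_2\ge\cdots\ge d_n$ are the diagonal entries of $\tilde{\mathbf Q}^{(T)}_{st}$ arranged in nonincreasing order, then $$\max_{1\le i\le n}|\mu_i-d_i|<\sqrt{n(n-1)}\,\epsilon .$$
   Context: Quaternions, dual quaternions $\hat q=q_{st}+q_{\mathcal I}\varepsilon$ ($\varepsilon$ commuting with quaternions, $\varepsilon^2=0$, product $(p_{st}+p_{\mathcal I}\varepsilon)(q_{st}+q_{\mathcal I}\varepsilon)=p_{st}q_{st}+(p_{st}q_{\mathcal I}+p_{\mathcal I}q_{st})\varepsilon$), conjugate transposes, Hermitian and unitary matrices are as usual; a quaternion Hermitian matrix has real eigenvalues and real diagonal. For a dual quaternion matrix $\hat{\mathbf Q}^{(t)}$ write $\hat{\mathbf Q}^{(t)}=\tilde{\mathbf Q}^{(t)}_{st}+\tilde{\mathbf Q}^{(t)}_{\mathcal I}\varepsilon$. Givens matrix: for an $n\times n$ dual quaternion Hermitian $\hat{\mathbf Q}$ and $k<l$ with $\tilde c=(\tilde{\mathbf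 Q}_{st})_{kl}\ne0$, put $a=(\tilde{\mathbf Q}_{st})_{kk}$, $b=(\tilde{\mathbf Q}_{st})_{ll}$, let $\lambda_1,\lambda_2$ be the roots of $(a-x)(b-x)=|\tilde c|^2$, $\rho_i=((a-\lambda_i)^2+|\tilde c|^2)^{1/2}$, $\tilde{\mathbf U}=\begin{bmatrix}-\tilde c/\rho_1&-\tilde c/\rho_2\\ (a-\lambda_1)/\rho_1&(a-\lambda_2)/\rho_2\end{bmatrix}$; with $\tilde{\mathbf B}$ the $\{k,l\}$ principal $2\times2$ submatrix of $\tilde{\mathbf Q}_{\mathcal I}$, write $\tilde{\mathbf U}^\ast\tilde{\mathbf B}\tilde{\mathbf U}=\begin{bmatrix}x&\tilde z\\ \tilde z^\ast&y\end{bmatrix}$ and $\hat{\mathbf V}=\begin{bmatrix}1&\frac{\tilde z}{\lambda_2-\lambda_1}\varepsilon\\ \frac{\tilde z^\ast}{\lambda_1-\lambda_2}\varepsilon&1\end{bmatrix}$. $J_{\hat{\mathbf Q}}(k,l)$ is the $n\times n$ identity with its $\{k,l\}$ rows/columns block replaced by $\tilde{\mathbf U}\hat{\mathbf V}$. Algorithm 1 (accuracy $\epsilon>0$): set $\hat{\mathbf Q}^{(0)}=\hat{\mathbf Q}$. At iteration $t=0,1,2,\dots$ compute $r^{(t)}=\max_{i<j}|(\tilde{\mathbf Q}^{(t)}_{st})_{ij}|$; if $r^{(t)}<\epsilon$ stop; otherwise choose $(k,l)$, $k<l$, attaining this maximum and set $\hat{\mathbf Q}^{(t+1)}=J_{\hat{\mathbf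 Q}^{(t)}}(k,l)^\ast\hat{\mathbf Q}^{(t)}J_{\hat{\mathbf Q}^{(t)}}(k,l)$. *)

(* Defs.v *)
From HB Require Import structures.
From mathcomp Require Import all_boot all_order all_algebra all_fingroup.
From mathcomp Require Import reals.
Set Implicit Arguments. Unset Strict Implicit. Unset Printing Implicit Defensive.
Import Order.TTheory GRing.Theory Num.Theory.
Local Open Scope ring_scope.

Section Quat.
Variable R : realType.

Record quat := Quat { qre : R; qi : R; qj : R; qk : R }.

Definition qzero : quat := Quat 0 0 0 0.
Definition qone : quat := Quat 1 0 0 0.
Definition qreal (r : R) : quat := Quat r 0 0 0.
Definition qadd (p q : quat) : quat :=
  Quat (qre p + qre q) (qi p + qi q) (qj p + qj q) (qk p + qk q).
Definition qscale (r : R) (q : quat) : quat :=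
  Quat (r * qre q) (r * qi q) (r * qj q) (r * qk q).
Definition qmul (p q : quat) : quat :=
  Quat (qre p * qre q - qi p * qi q - qj p * qj q - qk p * qk q)
       (qre p * qi q + qi p * qre q + qj p * qk q - qk p * qj q)
       (qre p * qj q - qi p * qk q + qj p * qre q + qk p * qi q)
       (qre p * qk q + qi p * qj q - qj p * qi q + qk p * qre q).
Definition qconj (q : quat) : quat := Quat (qre q) (- qi q) (- qj q) (- qk q).
Definition qnorm2 (q : quat) : R := qre q ^+ 2 + qi q ^+ 2 + qj q ^+ 2 + qk q ^+ 2.
Definition qabs (q : quat) : R := Num.sqrt (qnorm2 q).

Definition qmxmul {m n p} (A : 'M[quat]_(m, n)) (B : 'M[quat]_(n, p))
  : 'M[quat]_(m, p) :=
  \matrix_(i, j) \big[qadd/qzero]_(k < n) qmul (A i k) (B k j).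
Definition qmxadd {m n} (A B : 'M[quat]_(m, n)) : 'M[quat]_(m, n) :=
  \matrix_(i, j) qadd (A i j) (B i j).
Definition qmxct {m n} (A : 'M[quat]_(m, n)) : 'M[quat]_(n, m) :=
  \matrix_(i, j) qconj (A j i).
Definition qmx1 {n} : 'M[quat]_n := \matrix_(i, j) if i == j then qone else qzero.
Definition qmxdiag {n} (d : 'I_n -> R) : 'M[quat]_n :=
  \matrix_(i, j) if i == j then qreal (d i) else qzero.
Definition qhermitian {n} (A : 'M[quat]_n) : Prop := qmxct A = A.
Definition qunitary {n} (U : 'M[quat]_n) : Prop := qmxmul (qmxct U) U = qmx1.

(** [mu] lists the (real) eigenvalues of the quaternion Hermitian matrix [A],
    with multiplicity: A is unitarily diagonalised as U^* A U = diag(mu). *)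
Definition qeigenvalues {n} (A : 'M[quat]_n) (mu : 'I_n -> R) : Prop :=
  exists U : 'M[quat]_n, qunitary U /\ qmxmul (qmxct U) (qmxmul A U) = qmxdiag mu.

(** Dual quaternion matrices Q = Q_st + Q_I eps *)
Record dqmx (n : nat) := DQMx { dst : 'M[quat]_n; dI : 'M[quat]_n }.

Definition dqmxmul {n} (P Q : dqmx n) : dqmx n :=
  DQMx (qmxmul (dst P) (dst Q))
       (qmxadd (qmxmul (dst P) (dI Q)) (qmxmul (dI P) (dst Q))).
Definition dqmxct {n} (P : dqmx n) : dqmx n := DQMx (qmxct (dst P)) (qmxct (dI P)).
Definition dqhermitian {n} (P : dqmx n) : Prop := dqmxct P = P.

Definition offmax {n} (A : 'M[quat]_n) : R :=
  \big[Num.max/0]_(i < n) \big[Num.max/0]_(j < n | (i < j)%N) qabs (A i j).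

Section Givens.
Variables (n : nat) (Q : dqmx n) (k l : 'I_n).

Definition giv_a : R := qre (dst Q k k).
Definition giv_b : R := qre (dst Q l l).
Definition giv_c : quat := dst Q k l.
(** roots of (a-x)(b-x) = |c|^2, lambda_{1,2} = (a+b +- sqrt((a-b)^2+4|c|^2))/2 *)
Definition giv_disc : R := Num.sqrt ((giv_a - giv_b) ^+ 2 + 4 * qnorm2 giv_c).
Definition giv_l1 : R := (giv_a + giv_b + giv_disc) / 2.
Definition giv_l2 : R := (giv_a + giv_b - giv_disc) / 2.
Definition giv_rho (lam : R) : R := Num.sqrt ((giv_a - lam) ^+ 2 + qnorm2 giv_c).

Definition mx2 (x11 x12 x21 x22 : quat) : 'M[quat]_2 :=
  \matrix_(i, j) if i == ord0 then (if j == ord0 then x11 else x12)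
                 else (if j == ord0 then x21 else x22).

Definition giv_U : 'M[quat]_2 :=
  mx2 (qscale (- (giv_rho giv_l1)^-1) giv_c) (qscale (- (giv_rho giv_l2)^-1) giv_c)
      (qreal ((giv_a - giv_l1) / giv_rho giv_l1)) (qreal ((giv_a - giv_l2) / giv_rho giv_l2)).

Definition kl (i : 'I_2) : 'I_n := if i == ord0 then k else l.
Definition giv_B : 'M[quat]_2 := \matrix_(i, j) dI Q (kl i) (kl j).
Definition giv_z : quat := (qmxmul (qmxct giv_U) (qmxmul giv_B giv_U)) ord0 ord_max.

(** V = 1 + V_I eps *)
Definition giv_VI : 'M[quat]_2 :=
  mx2 qzero (qscale ((giv_l2 - giv_l1)^-1) giv_z)
      (qscale ((giv_l1 - giv_l2)^-1) (qconj giv_z)) qzero.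
(** U V = U + (U V_I) eps *)
Definition giv_UV : dqmx 2 := DQMx giv_U (qmxmul giv_U giv_VI).

Definition idx2 (i : 'I_n) : 'I_2 := if i == k then ord0 else ord_max.
Definition inkl (i : 'I_n) : bool := (i == k) || (i == l).

Definition givens : dqmx n :=
  DQMx (\matrix_(i, j) if inkl i && inkl j then dst giv_UV (idx2 i) (idx2 j)
                       else qmx1 i j)
       (\matrix_(i, j) if inkl i && inkl j then dI giv_UV (idx2 i) (idx2 j)
                       else qzero).
End Givens.

(** Qs is a run of Algorithm 1 on Q with accuracy eps: at each iteration where
    the algorithm does not stop, Qs (t+1) = J^* Qs t J for some maximising
    pair k < l. (After stopping, Qs is unconstrained.) *)
Definition alg1_run {n} (Q : dqmx n) (eps : R) (Qs : nat -> dqmx n) : Prop :=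
  Qs 0%N = Q /\
  forall t : nat, eps <= offmax (dst (Qs t)) ->
    exists k l : 'I_n, (k < l)%N /\ qabs (dst (Qs t) k l) = offmax (dst (Qs t)) /\
      Qs t.+1 = dqmxmul (dqmxct (givens (Qs t) k l)) (dqmxmul (Qs t) (givens (Qs t) k l)).

End Quat.

(* Main.v *)
Require Import Defs.
From HB Require Import structures.
From mathcomp Require Import all_boot all_order all_algebra all_fingroup.
From mathcomp Require Import reals.
From mathcomp.algebra_tactics Require Import ring lra.
Import Order.TTheory GRing.Theory Num.Theory.
Local Open Scope ring_scope.

Set Implicit Arguments. Unset Strict Implicit. Unset Printing Implicit Defensive.

Section QuatRing.
Variable R : realType.
Local Notation quat := (quat R).

Definition q2t (q : quat) := (qre q, qi q, qj q, qk q).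
Definition t2q (t : R * R * R * R) : quat := let: (a, b, c, d) := t in Quat a b c d.
Lemma q2tK : cancel q2t t2q. Proof. by case. Qed.
HB.instance Definition _ := Choice.copy quat (can_type q2tK).

Definition qopp (q : quat) : quat := Quat (- qre q) (- qi q) (- qj q) (- qk q).

Lemma quatP (p q : quat) : qre p = qre q -> qi p = qi q -> qj p = qj q -> qk p = qk q -> p = q.
Proof. by case: p; case: q => /= ? ? ? ? ? ? ? ? -> -> -> ->. Qed.

Ltac qsolve := repeat match goal with q : quat |- _ => case: q end; move=> *;
  apply: quatP => /=; ring.

Lemma qaddA : associative (@qadd R). Proof. by move=> *; qsolve. Qed.
Lemma qaddC : commutative (@qadd R). Proof. by move=> *; qsolve. Qed.
Lemma qadd0 : left_id (qzero R) (@qadd R). Proof. by move=> *; qsolve. Qed.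
Lemma qaddN : left_inverse (qzero R) qopp (@qadd R). Proof. by move=> *; qsolve. Qed.
HB.instance Definition _ := GRing.isZmodule.Build quat qaddA qaddC qadd0 qaddN.
Lemma qmulA : associative (@qmul R). Proof. by move=> *; qsolve. Qed.
Lemma qmul1 : left_id (qone R) (@qmul R). Proof. by move=> *; qsolve. Qed.
Lemma qmulr1 : right_id (qone R) (@qmul R). Proof. by move=> *; qsolve. Qed.
Lemma qmulDl : left_distributive (@qmul R) (@qadd R). Proof. by move=> *; qsolve. Qed.
Lemma qmulDr : right_distributive (@qmul R) (@qadd R). Proof. by move=> *; qsolve. Qed.
Lemma qone_neq0 : qone R != qzero R.
Proof. by apply/eqP => -[] /eqP; rewrite oner_eq0. Qed.
HB.instance Definition _ := GRing.Zmodule_isNzRing.Build quat qmulA qmul1 qmulr1 qmulDl qmulDr qone_neq0.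

Lemma qaddE (p q : quat) : qadd p q = p + q. Proof. by []. Qed.
Lemma qmulE (p q : quat) : qmul p q = p * q. Proof. by []. Qed.
Lemma qzeroE : qzero R = 0. Proof. by []. Qed.
Lemma qoneE : qone R = 1. Proof. by []. Qed.
End QuatRing.

Section QuatFacts.
Variable R : realType.
Local Notation quat := (quat R).

Ltac qsolve2 := repeat match goal with q : quat |- _ => case: q end; move=> *;
  apply: quatP => /=; ring.

Lemma qconjM (p q : quat) : qconj (p * q) = qconj q * qconj p. Proof. by qsolve2. Qed.
Lemma qconjD (p q : quat) : qconj (p + q) = qconj p + qconj q. Proof. by qsolve2. Qed.
Lemma qconjN (p : quat) : qconj (- p) = - qconj p. Proof. by qsolve2. Qed.
Lemma qconjK (p : quat) : qconj (qconj p) = p. Proof. by qsolve2. Qed.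
Lemma qconj0 : qconj (0 : quat) = 0. Proof. by apply: quatP => /=; rewrite ?oppr0. Qed.
Lemma qconj1 : qconj (1 : quat) = 1. Proof. by apply: quatP => /=; rewrite ?oppr0. Qed.
Lemma qconj_sum I (r : seq I) (P : pred I) (F : I -> quat) :
  qconj (\sum_(i <- r | P i) F i) = \sum_(i <- r | P i) qconj (F i).
Proof.
elim/big_rec2: _ => [|i x y _ <-]; first exact: qconj0.
by rewrite qconjD.
Qed.

Lemma qreE (p q : quat) : qre (p + q) = qre p + qre q. Proof. by []. Qed.
Lemma qreN (p : quat) : qre (- p) = - qre p. Proof. by []. Qed.
Lemma qre0 : qre (0 : quat) = 0. Proof. by []. Qed.
Lemma qre_sum I (r : seq I) (P : pred I) (F : I -> quat) :
  qre (\sum_(i <- r | P i) F i) = \sum_(i <- r | P i) qre (F i).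
Proof. by elim/big_rec2: _ => [|i x y _ <-]. Qed.
Lemma qreC (p q : quat) : qre (p * q) = qre (q * p). Proof. by case: p; case: q => /= *; ring. Qed.
Lemma qre_conj (p : quat) : qre (qconj p) = qre p. Proof. by []. Qed.

Lemma qnorm2M (p q : quat) : qnorm2 (p * q) = qnorm2 p * qnorm2 q.
Proof. by case: p; case: q => /= *; rewrite /qnorm2 /=; ring. Qed.
Lemma qnorm2_conj (p : quat) : qnorm2 (qconj p) = qnorm2 p.
Proof. by rewrite /qnorm2 /= !sqrrN. Qed.
Lemma qnorm2_ge0 (p : quat) : 0 <= qnorm2 p.
Proof. by rewrite /qnorm2 !addr_ge0 ?sqr_ge0. Qed.
Lemma qnorm2_eq0 (p : quat) : (qnorm2 p == 0) = (p == 0).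
Proof.
apply/eqP/eqP => [|->]; last by rewrite /qnorm2 /= expr0n /= !addr0.
case: p => a b c d; rewrite /qnorm2 /= => h.
have ha : a ^+ 2 = 0 by nra.
have hb : b ^+ 2 = 0 by nra.
have hc : c ^+ 2 = 0 by nra.
have hd : d ^+ 2 = 0 by nra.
by move: ha hb hc hd => /eqP; rewrite sqrf_eq0 => /eqP -> /eqP; rewrite sqrf_eq0 => /eqP ->
  /eqP; rewrite sqrf_eq0 => /eqP -> /eqP; rewrite sqrf_eq0 => /eqP ->.
Qed.
Lemma qabs_ge0 (p : quat) : 0 <= qabs p. Proof. exact: sqrtr_ge0. Qed.
Lemma qabs_sq (p : quat) : qabs p ^+ 2 = qnorm2 p.
Proof. by rewrite /qabs sqr_sqrtr // qnorm2_ge0. Qed.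
Lemma qabsM (p q : quat) : qabs (p * q) = qabs p * qabs q.
Proof. by rewrite /qabs qnorm2M sqrtrM // qnorm2_ge0. Qed.
Lemma qabs_conj (p : quat) : qabs (qconj p) = qabs p.
Proof. by rewrite /qabs qnorm2_conj. Qed.
Lemma qre_le_abs (p : quat) : `|qre p| <= qabs p.
Proof.
rewrite -ler_sqr ?nnegrE ?qabs_ge0 // qabs_sq real_normK ?num_real //.
by rewrite /qnorm2 -!addrA lerDl !addr_ge0 ?sqr_ge0.
Qed.

Lemma qconj_mulr (p : quat) : qconj p * p = qreal (qnorm2 p).
Proof. by case: p => *; apply: quatP => /=; rewrite /qnorm2 /=; ring. Qed.
Lemma qmul_conjr (p : quat) : p * qconj p = qreal (qnorm2 p).
Proof. by case: p => *; apply: quatP => /=; rewrite /qnorm2 /=; ring. Qed.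

Lemma qrealD (a b : R) : qreal (a + b) = qreal a + qreal b.
Proof. by apply: quatP => /=; rewrite ?addr0. Qed.
Lemma qrealM (a b : R) : qreal (a * b) = qreal a * qreal b.
Proof. by apply: quatP => /=; ring. Qed.
Lemma qreal0 : qreal 0 = 0 :> quat. Proof. by []. Qed.
Lemma qreal1 : qreal 1 = 1 :> quat. Proof. by []. Qed.
Lemma qrealC (a : R) (q : quat) : qreal a * q = q * qreal a.
Proof. by case: q => *; apply: quatP => /=; ring. Qed.
Lemma qreal_scale (a : R) (q : quat) : qreal a * q = qscale a q.
Proof. by case: q => *; apply: quatP => /=; ring. Qed.
Lemma qconj_real (a : R) : qconj (qreal a) = qreal a.
Proof. by apply: quatP => //=; rewrite ?oppr0. Qed.

Definition qinv (p : quat) : quat := qscale (qnorm2 p)^-1 (qconj p).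
Lemma qinvK (p : quat) : p != 0 -> qinv p * p = 1.
Proof.
rewrite -qnorm2_eq0 => hp; rewrite /qinv -qreal_scale -mulrA qconj_mulr -qrealM.
by rewrite mulVf.
Qed.
Lemma qmulV (p : quat) : p != 0 -> p * qinv p = 1.
Proof.
rewrite -qnorm2_eq0 => hp; rewrite /qinv -qreal_scale qrealC mulrA qmul_conjr -qrealM.
by rewrite divff.
Qed.
End QuatFacts.

Section QuatMx.
Variable R : realType.
Local Notation quat := (quat R).

Lemma qmxmulE m n p (A : 'M[quat]_(m, n)) (B : 'M[quat]_(n, p)) : qmxmul A B = A *m B.
Proof. by apply/matrixP => i j; rewrite !mxE. Qed.
Lemma qmxaddE m n (A B : 'M[quat]_(m, n)) : qmxadd A B = A + B.
Proof. by apply/matrixP => i j; rewrite !mxE. Qed.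
Lemma qmx1E n : @qmx1 R n = 1%:M :> 'M[quat]_n.
Proof. by apply/matrixP => i j; rewrite !mxE; case: eqP. Qed.

Lemma qmxct_mul m n p (A : 'M[quat]_(m, n)) (B : 'M[quat]_(n, p)) :
  qmxct (A *m B) = qmxct B *m qmxct A.
Proof.
apply/matrixP => i j; rewrite !mxE qconj_sum; apply: eq_bigr => k _.
by rewrite !mxE qconjM.
Qed.
Lemma qmxctK m n (A : 'M[quat]_(m, n)) : qmxct (qmxct A) = A.
Proof. by apply/matrixP => i j; rewrite !mxE qconjK. Qed.
Lemma qmxct1 n : qmxct 1%:M = 1%:M :> 'M[quat]_n.
Proof. by apply/matrixP => i j; rewrite !mxE eq_sym; case: eqP; rewrite ?qconj1 ?qconj0. Qed.
Lemma qmxctD m n (A B : 'M[quat]_(m, n)) : qmxct (A + B) = qmxct A + qmxct B.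
Proof. by apply/matrixP => i j; rewrite !mxE qconjD. Qed.
Lemma qmxctE m n (A : 'M[quat]_(m, n)) i j : qmxct A i j = qconj (A j i).
Proof. by rewrite mxE. Qed.

Definition qunit n (U : 'M[quat]_n) := qmxct U *m U = 1%:M.
Lemma qunitaryE n (U : 'M[quat]_n) : qunitary U <-> qunit U.
Proof. by rewrite /qunitary /qunit qmxmulE qmx1E. Qed.

Lemma qunit_mul n (U V : 'M[quat]_n) : qunit U -> qunit V -> qunit (U *m V).
Proof.
rewrite /qunit => hU hV; rewrite qmxct_mul -mulmxA (mulmxA (qmxct U)) hU mul1mx //.
Qed.
End QuatMx.

Section Jmx.
Variable R : realType.
Local Notation quat := (quat R).
Variables (n : nat) (k l : 'I_n).
Hypothesis kl_neq : k != l.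

Definition Jmx (U : 'M[quat]_2) : 'M[quat]_n :=
  \matrix_(i, j) if inkl k l i && inkl k l j then U (idx2 k i) (idx2 k j) else @qmx1 R n i j.

Lemma idx2k : idx2 k k = ord0. Proof. by rewrite /idx2 eqxx. Qed.
Lemma idx2l : idx2 k l = ord_max. Proof. by rewrite /idx2 eq_sym (negbTE kl_neq). Qed.
Lemma inklk : inkl k l k. Proof. by rewrite /inkl eqxx. Qed.
Lemma inkll : inkl k l l. Proof. by rewrite /inkl eqxx orbT. Qed.

Lemma sum_kl (F : 'I_n -> quat) :
  \sum_q F q = F k + F l + \sum_(q | ~~ inkl k l q) F q.
Proof.
rewrite (bigD1 k) //= (bigD1 l) /=; last by rewrite eq_sym.
rewrite addrA; congr (_ + _); apply: eq_bigl => q.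
by rewrite /inkl negb_or andbC.
Qed.

Lemma mulJ m (U : 'M[quat]_2) (X : 'M[quat]_(m, n)) i j :
  (X *m Jmx U) i j = if inkl k l j then X i k * U ord0 (idx2 k j) + X i l * U ord_max (idx2 k j)
                     else X i j.
Proof.
rewrite !mxE sum_kl !mxE inklk inkll /= idx2k idx2l.
case: ifP => hj.
  rewrite big1 ?addr0 // => q hq; rewrite !mxE (negbTE hq) /=.
  case: eqP => [eqj|]; last by rewrite mulr0.
  by move: hq; rewrite eqj hj.
have hk : (k == j) = false by apply/negbTE; apply: contraFN hj => /eqP <-; exact: inklk.
have hl : (l == j) = false by apply/negbTE; apply: contraFN hj => /eqP <-; exact: inkll.
rewrite hk hl !mulr0 !add0r (bigD1 j) /=; last by rewrite hj.
rewrite !mxE hj eqxx /= mulr1 big1 ?addr0 // => q /andP [hq hqj]; rewrite !mxE (negbTE hq) /=.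
by rewrite (negbTE hqj) mulr0.
Qed.

Lemma Jct (U : 'M[quat]_2) : qmxct (Jmx U) = Jmx (qmxct U).
Proof.
apply/matrixP => i j; rewrite !mxE andbC; case: ifP => _; first by rewrite ?mxE.
by rewrite eq_sym; case: eqP; rewrite ?qconj1 ?qconj0.
Qed.

Lemma ctmulJ m (U : 'M[quat]_2) (X : 'M[quat]_(n, m)) i j :
  (qmxct (Jmx U) *m X) i j = if inkl k l i then qconj (U ord0 (idx2 k i)) * X k j
                               + qconj (U ord_max (idx2 k i)) * X l j
                     else X i j.
Proof.
rewrite -[X]qmxctK -qmxct_mul [LHS]qmxctE mulJ !qmxctK; case: ifP => _; rewrite ?qmxctE ?qconjK //.
by rewrite qconjD !qconjM ?qmxctE !qconjK.
Qed.

Lemma sum2 (F : 'I_2 -> quat) : \sum_i F i = F ord0 + F ord_max.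
Proof. by rewrite big_ord_recl big_ord1; congr (_ + F _); apply: val_inj. Qed.

Lemma idx2_inj i j : inkl k l i -> inkl k l j -> (idx2 k i == idx2 k j) = (i == j).
Proof.
have hlk : (l == k) = false by rewrite eq_sym (negbTE kl_neq).
rewrite /inkl /idx2 => /orP [] /eqP -> /orP [] /eqP ->; rewrite ?eqxx ?hlk ?(negbTE kl_neq) //.
Qed.

Lemma Junit (U : 'M[quat]_2) : qunit U -> qunit (Jmx U).
Proof.
rewrite /qunit => hU; apply/matrixP => i j; rewrite ctmulJ !mxE inklk inkll /= idx2k idx2l.
case hi: (inkl k l i); case hj: (inkl k l j) => /=.
- move/matrixP: hU => /(_ (idx2 k i) (idx2 k j)); rewrite !mxE sum2 !mxE => ->.
  by rewrite idx2_inj.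
- have hk : (k == j) = false by apply/negbTE; apply: contraFN hj => /eqP <-; exact: inklk.
  have hl : (l == j) = false by apply/negbTE; apply: contraFN hj => /eqP <-; exact: inkll.
  rewrite hk hl !mulr0 addr0; case: eqP => // eij; move: hj; rewrite -eij hi //.
- by case: eqP => // eij; move: hi; rewrite eij hj.
- by case: eqP.
Qed.

Lemma Junit' (U : 'M[quat]_2) : U *m qmxct U = 1%:M -> Jmx U *m qmxct (Jmx U) = 1%:M.
Proof.
move=> h; have := @Junit (qmxct U); rewrite /qunit Jct !qmxctK => /(_ h).
by rewrite Jct.
Qed.
End Jmx.

Section Giv.
Variable R : realType.
Local Notation quat := (quat R).

Lemma mx2E (x11 x12 x21 x22 : quat) :
  [/\ mx2 x11 x12 x21 x22 ord0 ord0 = x11, mx2 x11 x12 x21 x22 ord0 ord_max = x12,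
      mx2 x11 x12 x21 x22 ord_max ord0 = x21 & mx2 x11 x12 x21 x22 ord_max ord_max = x22].
Proof. by rewrite !mxE. Qed.

Lemma ord2P (P : 'I_2 -> Prop) : P ord0 -> P ord_max -> forall i, P i.
Proof.
move=> h0 h1 [[|[|//]] hi].
  by have -> : Ordinal hi = ord0 by apply: val_inj.
by have -> : Ordinal hi = ord_max by apply: val_inj.
Qed.

Variables (n : nat) (Q : dqmx R n) (k l : 'I_n).
Local Notation a := (giv_a Q k).
Local Notation b := (giv_b Q l).
Local Notation c := (giv_c Q k l).
Local Notation d := (giv_disc Q k l).
Local Notation l1 := (giv_l1 Q k l).
Local Notation l2 := (giv_l2 Q k l).
Local Notation C := (qnorm2 c).
Definition x1 := a - l1.
Definition x2 := a - l2.
Definition s1 := (giv_rho Q k l l1)^-1.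
Definition s2 := (giv_rho Q k l l2)^-1.

Hypothesis Cpos : 0 < C.

Lemma hd : d ^+ 2 = (a - b) ^+ 2 + 4 * C.
Proof. by rewrite /giv_disc sqr_sqrtr // addr_ge0 ?sqr_ge0 // mulr_ge0 // qnorm2_ge0. Qed.
Lemma hx12 : x1 * x2 = - C.
Proof. have := hd; rewrite /x1 /x2 /giv_l1 /giv_l2; nra. Qed.
Lemma hx1 : x1 * (b - a + x1) = C.
Proof. have := hd; rewrite /x1 /giv_l1; nra. Qed.
Lemma hx2 : x2 * (b - a + x2) = C.
Proof. have := hd; rewrite /x2 /giv_l2; nra. Qed.
Lemma hl12 : l1 ^+ 2 + l2 ^+ 2 = a ^+ 2 + b ^+ 2 + 2 * C.
Proof. have := hd; rewrite /giv_l1 /giv_l2; lra. Qed.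
Lemma hs1 : s1 ^+ 2 * (x1 ^+ 2 + C) = 1.
Proof.
rewrite /s1 /giv_rho -/x1 exprVn sqr_sqrtr ?mulVf //.
  by rewrite gt_eqF // ltr_pwDr // sqr_ge0.
by rewrite addr_ge0 // ?sqr_ge0 // qnorm2_ge0.
Qed.
Lemma hs2 : s2 ^+ 2 * (x2 ^+ 2 + C) = 1.
Proof.
rewrite /s2 /giv_rho -/x2 exprVn sqr_sqrtr ?mulVf //.
  by rewrite gt_eqF // ltr_pwDr // sqr_ge0.
by rewrite addr_ge0 // ?sqr_ge0 // qnorm2_ge0.
Qed.
Lemma hP1 : 0 < x1 ^+ 2 + C. Proof. by rewrite ltr_pwDr // sqr_ge0. Qed.
Lemma hP2 : 0 < x2 ^+ 2 + C. Proof. by rewrite ltr_pwDr // sqr_ge0. Qed.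

Lemma hs1' : s1 ^+ 2 = (x1 ^+ 2 + C)^-1.
Proof. by rewrite -[LHS](mulfK (lt0r_neq0 hP1)) hs1 mul1r. Qed.
Lemma hs2' : s2 ^+ 2 = (x2 ^+ 2 + C)^-1.
Proof. by rewrite -[LHS](mulfK (lt0r_neq0 hP2)) hs2 mul1r. Qed.

Lemma hsum1 : s1 ^+ 2 * C + s2 ^+ 2 * C = 1.
Proof.
have p1 := hP1; have p2 := hP2.
rewrite hs1' hs2'; apply/eqP; rewrite -subr_eq0; apply/eqP.
have -> : (x1 ^+ 2 + C)^-1 * C + (x2 ^+ 2 + C)^-1 * C - 1 =
  (C ^+ 2 - (x1 * x2) ^+ 2) / ((x1 ^+ 2 + C) * (x2 ^+ 2 + C)).
  by field; rewrite ?mulf_neq0 ?gt_eqF.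
by rewrite hx12 sqrrN subrr mul0r.
Qed.
Lemma hsum2 : s1 ^+ 2 * x1 ^+ 2 + s2 ^+ 2 * x2 ^+ 2 = 1.
Proof.
have p1 := hP1; have p2 := hP2.
rewrite hs1' hs2'; apply/eqP; rewrite -subr_eq0; apply/eqP.
have -> : (x1 ^+ 2 + C)^-1 * x1 ^+ 2 + (x2 ^+ 2 + C)^-1 * x2 ^+ 2 - 1 =
  ((x1 * x2) ^+ 2 - C ^+ 2) / ((x1 ^+ 2 + C) * (x2 ^+ 2 + C)).
  by field; rewrite ?mulf_neq0 ?gt_eqF.
by rewrite hx12 sqrrN subrr mul0r.
Qed.
Lemma hsum3 : s1 ^+ 2 * x1 + s2 ^+ 2 * x2 = 0.
Proof.
have p1 := hP1; have p2 := hP2.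
rewrite hs1' hs2'.
have -> : (x1 ^+ 2 + C)^-1 * x1 + (x2 ^+ 2 + C)^-1 * x2 =
  (x1 + x2) * (x1 * x2 + C) / ((x1 ^+ 2 + C) * (x2 ^+ 2 + C)).
  by field; rewrite ?mulf_neq0 ?gt_eqF.
by rewrite hx12 addNr mulr0 mul0r.
Qed.
Lemma hs12 : s1 * s2 * (x1 * x2 + C) = 0.
Proof. by rewrite hx12 addNr mulr0. Qed.

Lemma giv_UE : giv_U Q k l =
  mx2 (qscale (- s1) c) (qscale (- s2) c) (qreal (x1 * s1)) (qreal (x2 * s2)).
Proof. by []. Qed.

Lemma giv_U_unit : qmxct (giv_U Q k l) *m giv_U Q k l = 1%:M.
Proof.
have h1 := hs1; have h2 := hs2; have h3 := hsum1; have h4 := hsum2; have h5 := hsum3.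
have h6 := hs12.
rewrite giv_UE; apply/matrixP; apply: ord2P; apply: ord2P; rewrite !mxE sum2 !mxE /=;
move: h1 h2 h3 h4 h5 h6; rewrite /qnorm2; case: (giv_c Q k l) => c0 c1 c2 c3 /= *;
apply: quatP => /=.
all: lra.
Qed.

Lemma giv_U_unit' : giv_U Q k l *m qmxct (giv_U Q k l) = 1%:M.
Proof.
have h1 := hs1; have h2 := hs2; have h3 := hsum1; have h4 := hsum2; have h5 := hsum3.
have h6 := hs12.
rewrite giv_UE; apply/matrixP; apply: ord2P; apply: ord2P; rewrite !mxE sum2 !mxE /=;
move: h1 h2 h3 h4 h5 h6; rewrite /qnorm2; case: (giv_c Q k l) => c0 c1 c2 c3 /= g1 g2 g3 g4 g5 g6.
all: have e0 : c0 * (s1 ^+ 2 * x1 + s2 ^+ 2 * x2) = 0 by rewrite g5 mulr0.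
all: have e1 : c1 * (s1 ^+ 2 * x1 + s2 ^+ 2 * x2) = 0 by rewrite g5 mulr0.
all: have e2 : c2 * (s1 ^+ 2 * x1 + s2 ^+ 2 * x2) = 0 by rewrite g5 mulr0.
all: have e3 : c3 * (s1 ^+ 2 * x1 + s2 ^+ 2 * x2) = 0 by rewrite g5 mulr0.
all: apply: quatP => /=.
all: lra.
Qed.

Hypothesis herm : qmxct (dst Q) = dst Q.
Hypothesis kl : (k < l)%N.
Lemma kl_neq : k != l. Proof. by rewrite neq_ltn kl. Qed.

Lemma herm_diag i : dst Q i i = qreal (qre (dst Q i i)).
Proof.
have := congr1 (fun M : 'M[quat]_n => M i i) herm; rewrite /= mxE.
case: (dst Q i i) => q0 q1 q2 q3 /= [] h1 h2 h3; apply: quatP => //=; lra.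
Qed.
Lemma herm_sym i j : dst Q j i = qconj (dst Q i j).
Proof. by rewrite -[in LHS]herm mxE. Qed.

Local Notation J := (Jmx k l (giv_U Q k l)).
Local Notation B := (qmxct J *m (dst Q *m J)).

Lemma Bkk : B k k = qreal l1.
Proof.
rewrite (ctmulJ kl_neq) (inklk k l) !(mulJ kl_neq) (inklk k l) ?(idx2k k) ?(idx2l kl_neq).
rewrite (herm_diag k) (herm_diag l) (herm_sym k l) -/(giv_a Q k) -/(giv_b Q l) -/(giv_c Q k l).
rewrite giv_UE !mxE /=.
have h1 : s1 ^+ 2 * x1 * (x1 * (b - a + x1)) = s1 ^+ 2 * x1 * C by rewrite hx1.
have h2 : (a - x1) * (s1 ^+ 2 * (x1 ^+ 2 + C)) = a - x1 by rewrite hs1 mulr1.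
have hx : x1 = a - l1 by [].
move: h1 h2; rewrite /qnorm2; case: (giv_c Q k l) => c0 c1 c2 c3 /= *.
apply: quatP => /=; lra.
Qed.

Lemma Bll : B l l = qreal l2.
Proof.
rewrite (ctmulJ kl_neq) (inkll k l) !(mulJ kl_neq) (inkll k l) ?(idx2k k) ?(idx2l kl_neq).
rewrite (herm_diag k) (herm_diag l) (herm_sym k l) -/(giv_a Q k) -/(giv_b Q l) -/(giv_c Q k l).
rewrite giv_UE !mxE /=.
have h1 : s2 ^+ 2 * x2 * (x2 * (b - a + x2)) = s2 ^+ 2 * x2 * C by rewrite hx2.
have h2 : (a - x2) * (s2 ^+ 2 * (x2 ^+ 2 + C)) = a - x2 by rewrite hs2 mulr1.
have hx : x2 = a - l2 by [].
move: h1 h2; rewrite /qnorm2; case: (giv_c Q k l) => c0 c1 c2 c3 /= *.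
apply: quatP => /=; lra.
Qed.

Lemma Bii i : ~~ inkl k l i -> B i i = dst Q i i.
Proof. by move=> hi; rewrite (ctmulJ kl_neq) (negbTE hi) (mulJ kl_neq) (negbTE hi). Qed.
End Giv.

Section Off.
Variable R : realType.
Local Notation quat := (quat R).
Variable n : nat.
Implicit Types A B : 'M[quat]_n.

Definition Fro A := \sum_i \sum_j qnorm2 (A i j).
Definition dg A := \sum_i qnorm2 (A i i).
Definition off A := \sum_i \sum_(j | j != i) qnorm2 (A i j).

Lemma Fro_split A : Fro A = dg A + off A.
Proof.
rewrite /Fro /dg /off -big_split /=; apply: eq_bigr => i _.
by rewrite (bigD1 i).
Qed.
Lemma off_ge0 A : 0 <= off A.
Proof. by apply: sumr_ge0 => i _; apply: sumr_ge0 => j _; apply: qnorm2_ge0. Qed.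

Lemma Fro_ct A : Fro (qmxct A) = Fro A.
Proof.
rewrite /Fro exchange_big /=; apply: eq_bigr => i _; apply: eq_bigr => j _.
by rewrite mxE qnorm2_conj.
Qed.

Lemma qre_real (x : R) : qre (qreal x) = x. Proof. by []. Qed.
Lemma qnorm2_real (x : R) : qnorm2 (qreal x) = x ^+ 2.
Proof. by rewrite /qnorm2 /= expr0n /= !addr0. Qed.

Lemma Fro_tr A : Fro A = \sum_i qre ((A *m qmxct A) i i).
Proof.
apply: eq_bigr => i _; rewrite mxE qre_sum; apply: eq_bigr => j _.
by rewrite mxE qmul_conjr.
Qed.

Lemma Fro_mulU A J : J *m qmxct J = 1%:M -> Fro (A *m J) = Fro A.
Proof.
move=> hJ; rewrite !Fro_tr qmxct_mul mulmxA -(mulmxA A) hJ mulmx1 //.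
Qed.

Lemma Fro_sim A J : J *m qmxct J = 1%:M -> Fro (qmxct J *m (A *m J)) = Fro A.
Proof.
move=> hJ; rewrite mulmxA Fro_mulU // -[qmxct J *m A]qmxctK qmxct_mul qmxctK.
by rewrite Fro_ct Fro_mulU // Fro_ct.
Qed.

Lemma sum_klR (k l : 'I_n) (F : 'I_n -> R) : k != l ->
  \sum_q F q = F k + F l + \sum_(q | ~~ inkl k l q) F q.
Proof.
move=> kl; rewrite (bigD1 k) //= (bigD1 l) /=; last by rewrite eq_sym.
rewrite addrA; congr (_ + _); apply: eq_bigl => q.
by rewrite /inkl negb_or andbC.
Qed.

Definition qherm A := qmxct A = A.

Lemma herm_sim A J : qherm A -> qherm (qmxct J *m (A *m J)).
Proof. by rewrite /qherm => h; rewrite !qmxct_mul qmxctK h mulmxA. Qed.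

Lemma offmax_ge0 A : 0 <= offmax A.
Proof. exact: bigmax_ge_id. Qed.

Lemma le_offmax A (i j : 'I_n) : (i < j)%N -> qabs (A i j) <= offmax A.
Proof.
move=> ij; apply: le_trans (le_bigmax _ _ i).
exact: (le_bigmax_cond _ _ ij).
Qed.

Lemma herm_le_offmax A (i j : 'I_n) : qherm A -> i != j -> qabs (A i j) <= offmax A.
Proof.
move=> hA; rewrite neq_ltn => /orP [] ij; first exact: le_offmax.
have -> : A i j = qconj (A j i) by rewrite -[in LHS]hA mxE.
by rewrite qabs_conj le_offmax.
Qed.

Variables (Q : dqmx R n) (k l : 'I_n).
Hypothesis hQ : qherm (dst Q).
Hypothesis kl : (k < l)%N.
Hypothesis cpos : 0 < qnorm2 (dst Q k l).

Local Notation J := (dst (givens Q k l)).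

Lemma givensE : J = Jmx k l (giv_U Q k l). Proof. by []. Qed.

Lemma givens_unit : qunit J.
Proof.
rewrite givensE; apply: Junit; first by rewrite neq_ltn kl.
exact: giv_U_unit.
Qed.
Lemma givens_unit' : J *m qmxct J = 1%:M.
Proof.
rewrite givensE; apply: Junit'; first by rewrite neq_ltn kl.
exact: giv_U_unit'.
Qed.

Lemma off_step : off (qmxct J *m (dst Q *m J)) = off (dst Q) - 2 * qnorm2 (dst Q k l).
Proof.
have klneq : k != l by rewrite neq_ltn kl.
have e1 := Fro_split (qmxct J *m (dst Q *m J)).
have e2 := Fro_split (dst Q).
rewrite Fro_sim ?givens_unit' // in e1.
have hd : dg (qmxct J *m (dst Q *m J)) = dg (dst Q) + 2 * qnorm2 (dst Q k l).
  rewrite /dg (sum_klR _ klneq) (sum_klR (fun i => qnorm2 (dst Q i i)) klneq).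
  rewrite givensE (Bkk cpos hQ kl) (Bll cpos hQ kl).
  rewrite (eq_bigr (fun i => qnorm2 (dst Q i i))); last first.
    by move=> i hi; rewrite (Bii Q kl hi).
  rewrite (herm_diag hQ k) (herm_diag hQ l) !qnorm2_real.
  have := hl12 Q k l; rewrite -/(giv_a Q k) -/(giv_b Q l) -/(giv_c Q k l) => h.
  rewrite /giv_c in h; lra.
move: e1; rewrite e2 hd => e1; lra.
Qed.

Lemma herm_step : qherm (qmxct J *m (dst Q *m J)).
Proof. exact: herm_sim. Qed.
End Off.

Section Kernel.
Variable R : realType.
Local Notation quat := (quat R).
Variable I : finType.

Lemma kernel m : forall (A : 'I_m -> I -> quat) (S : {set I}), (m < #|S|)%N ->
  exists z : I -> quat, (exists k, z k != 0) /\ (forall k, k \notin S -> z k = 0) /\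
    forall r, \sum_k A r k * z k = 0.
Proof.
elim: m => [|m IH] A S hS.
  have [k0 hk0] : exists k0, k0 \in S.
    by move: hS; rewrite card_gt0 => /set0Pn.
  exists (fun k => if k == k0 then 1 else 0); split; first by exists k0; rewrite eqxx oner_neq0.
  split; last by case.
  by move=> k hk; case: eqP => // ek; move: hk; rewrite ek hk0.
case: (pickP (fun k => (k \in S) && (A ord0 k != 0))) => [k0 /andP [hk0 hp]|hnone].
  set p := A ord0 k0.
  pose A' (r : 'I_m) k := A (lift ord0 r) k - A (lift ord0 r) k0 * qinv p * A ord0 k.
  have hS' : (m < #|S :\ k0|)%N by rewrite (cardsD1 k0) hk0 /= add1n ltnS in hS.
  have [z' [[k1 hk1] [hsupp hrows]]] := IH A' (S :\ k0) hS'.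
  have z'k0 : z' k0 = 0 by apply: hsupp; rewrite !inE eqxx.
  pose w := - (qinv p * \sum_k A ord0 k * z' k).
  exists (fun k => if k == k0 then w else z' k); split.
    exists k1; case: (k1 =P k0) => // ek; move: hk1; rewrite ek z'k0 eqxx //.
  split.
    move=> k hk; case: (k =P k0) => [ek|_]; first by move: hk; rewrite ek hk0.
    by apply: hsupp; rewrite !inE (negbTE hk) andbF.
  have hsum r : \sum_k A r k * (if k == k0 then w else z' k) =
                \sum_k A r k * z' k + A r k0 * w.
    rewrite (bigD1 k0) //= eqxx [in RHS](bigD1 k0) //= z'k0 mulr0 add0r addrC.
    congr (_ + _); apply: eq_bigr => k /negbTE ->; done.
  move=> r; rewrite hsum; case: (unliftP ord0 r) => [r'|] ->.
    have := hrows r'; rewrite /A'.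
    under eq_bigr => k _ do rewrite mulrBl.
    rewrite sumrB => /eqP; rewrite subr_eq0 => /eqP ->.
    rewrite /w mulrN [X in _ - X]mulrA mulr_sumr.
    under [X in _ - X]eq_bigr => i _ do rewrite mulrA.
    by rewrite subrr.
  rewrite /w mulrN mulrA qmulV // mul1r subrr //.
have [z [hnz [hsupp hrows]]] := IH (fun r k => A (lift ord0 r) k) S (ltnW hS).
exists z; split=> //; split=> // r; case: (unliftP ord0 r) => [r'|] ->; first exact: hrows.
apply: big1 => k _; case hk: (k \in S); last by rewrite hsupp ?hk // mulr0.
by move: (hnone k); rewrite hk /= => /negbFE /eqP ->; rewrite mul0r.
Qed.
End Kernel.

Section Quad.
Variable R : realType.
Local Notation quat := (quat R).
Variable n : nat.
Implicit Types (M : 'M[quat]_n) (x y : 'cV[quat]_n).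

Definition vn2 y := \sum_j qnorm2 (y j 0).
Definition qf M y := qre ((qmxct y *m (M *m y)) 0 0).

Lemma vn2_ge0 y : 0 <= vn2 y.
Proof. by apply: sumr_ge0 => j _; apply: qnorm2_ge0. Qed.

Lemma vn2E y : vn2 y = qre ((qmxct y *m y) 0 0).
Proof.
rewrite mxE qre_sum; apply: eq_bigr => j _; rewrite mxE qconj_mulr //.
Qed.

Lemma vn2_unit (V : 'M[quat]_n) y : qunit V -> vn2 (V *m y) = vn2 y.
Proof. by move=> hV; rewrite !vn2E qmxct_mul -mulmxA (mulmxA (qmxct V)) hV mul1mx. Qed.

Lemma qf_mul M (V : 'M[quat]_n) y : qf M (V *m y) = qf (qmxct V *m (M *m V)) y.
Proof. by rewrite /qf qmxct_mul !mulmxA. Qed.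

Lemma qfE M y : qf M y = \sum_j \sum_k qre (qconj (y j 0) * M j k * y k 0).
Proof.
rewrite /qf mxE qre_sum; apply: eq_bigr => j _; rewrite !mxE mulr_sumr qre_sum.
by apply: eq_bigr => k _; rewrite mulrA.
Qed.

Lemma qre_real_sandwich (d : R) (a : quat) : qre (qconj a * qreal d * a) = d * qnorm2 a.
Proof. by rewrite -qrealC -mulrA qconj_mulr -qrealM. Qed.

Lemma sumD1R (F : 'I_n -> R) j : \sum_k F k = F j + \sum_(k | k != j) F k.
Proof. by rewrite (bigD1 j). Qed.

Lemma qf_diag (mu : 'I_n -> R) y : qf (qmxdiag mu) y = \sum_j mu j * qnorm2 (y j 0).
Proof.
rewrite qfE; apply: eq_bigr => j _; rewrite (sumD1R _ j) big1 ?addr0.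
  by rewrite mxE eqxx qre_real_sandwich.
by move=> k hk; rewrite mxE eq_sym (negbTE hk) mulr0 mul0r.
Qed.

Lemma amgm (a b : R) : 0 <= a -> 0 <= b -> a * b <= (a ^+ 2 + b ^+ 2) / 2.
Proof. move=> _ _; have := sqr_ge0 (a - b); lra. Qed.

Lemma off_term M (m : R) y j k : qabs (M j k) <= m ->
  `|qre (qconj (y j 0) * M j k * y k 0)| <= m * ((qnorm2 (y j 0) + qnorm2 (y k 0)) / 2).
Proof.
move=> hM; apply: le_trans (qre_le_abs _) _.
rewrite !qabsM qabs_conj -(qabs_sq (y j 0)) -(qabs_sq (y k 0)).
have h0 := qabs_ge0 (y j 0); have h1 := qabs_ge0 (y k 0); have h2 := qabs_ge0 (M j k).
have := amgm h0 h1; nra.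
Qed.

Lemma herm_diag' M j : qherm M -> M j j = qreal (qre (M j j)).
Proof.
move=> hM; have := congr1 (fun A : 'M[quat]_n => A j j) hM; rewrite /= mxE.
case: (M j j) => q0 q1 q2 q3 /= [] h1 h2 h3; apply: quatP => //=; lra.
Qed.

Lemma sum_constR (c : R) : \sum_(k < n) c = n%:R * c.
Proof. by rewrite sumr_const card_ord mulr_natl. Qed.

Lemma sum_neq (G : 'I_n -> R) j : \sum_(k | k != j) G k = \sum_k G k - G j.
Proof. by rewrite (sumD1R G j) addrAC subrr add0r. Qed.

Lemma sum_pairs (N : 'I_n -> R) :
  \sum_j \sum_(k | k != j) ((N j + N k) / 2) = (n%:R - 1) * \sum_j N j.
Proof.
under eq_bigr => j _ do rewrite sum_neq -mulr_suml big_split /= sum_constR.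
rewrite sumrB -!mulr_suml !big_split /= -mulr_sumr sum_constR.
by field.
Qed.

Lemma qf_bound M y : qherm M ->
  `|qf M y - \sum_j qre (M j j) * qnorm2 (y j 0)| <= offmax M * (n%:R - 1) * vn2 y.
Proof.
move=> hM.
have e : qf M y - \sum_j qre (M j j) * qnorm2 (y j 0) =
   \sum_j \sum_(k | k != j) qre (qconj (y j 0) * M j k * y k 0).
  rewrite qfE -sumrB; apply: eq_bigr => j _; rewrite (sumD1R _ j).
  rewrite (herm_diag' j hM) qre_real_sandwich; lra.
rewrite e; apply: le_trans (ler_norm_sum _ _ _) _.
have h1 : \sum_j `|\sum_(k | k != j) qre (qconj (y j 0) * M j k * y k 0)| <=
  \sum_j \sum_(k | k != j) `|qre (qconj (y j 0) * M j k * y k 0)|.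
  by apply: ler_sum => j _; apply: ler_norm_sum.
apply: le_trans h1 _.
have h2 : \sum_j \sum_(k | k != j) `|qre (qconj (y j 0) * M j k * y k 0)| <=
  \sum_j \sum_(k | k != j) offmax M * ((qnorm2 (y j 0) + qnorm2 (y k 0)) / 2).
  apply: ler_sum => j _; apply: ler_sum => k hk; apply: off_term.
  by apply: herm_le_offmax => //; rewrite eq_sym.
apply: le_trans h2 _.
under [X in X <= _]eq_bigr => j _ do rewrite -mulr_sumr.
by rewrite -mulr_sumr sum_pairs /vn2 mulrA.
Qed.
End Quad.

Section Eig.
Variable R : realType.
Local Notation quat := (quat R).
Variable n : nat.
Variables (U V : 'M[quat]_n).
Hypotheses (hU : qunit U) (hV : qunit V).

Lemma vn2_gt0 (x : 'cV[quat]_n) j : x j 0 != 0 -> 0 < vn2 x.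
Proof.
move=> hj; rewrite /vn2 (sumD1R _ j) ltr_pwDl //.
  by rewrite lt0r qnorm2_eq0 hj qnorm2_ge0.
by apply: sumr_ge0 => k _; apply: qnorm2_ge0.
Qed.

Lemma common (X Y : {set 'I_n}) : (n < #|X| + #|Y|)%N ->
  exists (a y : 'cV[quat]_n), 0 < vn2 a /\ (forall j, j \notin X -> a j 0 = 0) /\
    (forall j, j \notin Y -> y j 0 = 0) /\ U *m a = V *m y.
Proof.
move=> hXY.
pose S : {set 'I_n + 'I_n} :=
  [set x | match x with inl j => j \in X | inr j => j \in Y end].
have cS : #|S| = (#|X| + #|Y|)%N.
  by rewrite -!sum1_card big_sumType /=; congr (_ + _)%N; apply: eq_bigl => j; rewrite inE.
pose A (r : 'I_n) (x : 'I_n + 'I_n) : quat :=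
  match x with inl j => U r j | inr j => - V r j end.
have hS : (n < #|S|)%N by rewrite cS.
have [z [[k hk] [hsupp hrows]]] := @kernel R _ n A S hS.
pose a : 'cV[quat]_n := \col_j z (inl j).
pose y : 'cV[quat]_n := \col_j z (inr j).
have eq : U *m a = V *m y.
  apply/matrixP => r c; rewrite !mxE.
  rewrite /a /y; under eq_bigr do rewrite mxE; under [RHS]eq_bigr do rewrite mxE.
  have := hrows r; rewrite big_sumType /= /A => /eqP; rewrite addr_eq0 => /eqP ->.
  rewrite -sumrN; apply: eq_bigr => j _; rewrite mulNr opprK //.
have [j hj] : exists j, z (inl j) != 0.
  case: (pickP (fun j => z (inl j) != 0)) => [j hj | hnone]; first by exists j.
  exfalso.
  have a0 : a = 0 by apply/matrixP => j c; rewrite !mxE; move: (hnone j) => /negbFE/eqP.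
  have y0 : y = 0.
    by rewrite -[y]mul1mx -hV -mulmxA -eq a0 mulmx0 mulmx0.
  move: hk; case: k => j' /=; first by rewrite (negbFE (hnone j')).
  by have := congr1 (fun M : 'cV[quat]_n => M j' 0) y0; rewrite /= !mxE => ->; rewrite eqxx.
exists a, y; split; first by apply: (@vn2_gt0 _ j); rewrite mxE.
split; first by move=> j' hj'; rewrite mxE hsupp // inE.
split; first by move=> j' hj'; rewrite mxE hsupp // inE.
exact: eq.
Qed.

Variables (Q0 : 'M[quat]_n) (mu : 'I_n -> R).
Hypothesis hmu : qmxct U *m (Q0 *m U) = qmxdiag mu.
Local Notation D := (qmxct V *m (Q0 *m V)).

Lemma common_qf (X Y : {set 'I_n}) : (n < #|X| + #|Y|)%N ->
  exists (a y : 'cV[quat]_n), 0 < vn2 a /\ (forall j, j \notin X -> a j 0 = 0) /\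
    (forall j, j \notin Y -> y j 0 = 0) /\
    \sum_j mu j * qnorm2 (a j 0) = qf D y /\ vn2 y = vn2 a.
Proof.
move=> hXY; have [a [y [h1 [h2 [h3 e]]]]] := common hXY.
exists a, y; do 3! split => //; split.
  by rewrite -qf_diag -hmu -qf_mul e qf_mul.
by rewrite -(vn2_unit y hV) -e vn2_unit.
Qed.

Lemma card_split (i : 'I_n) :
  (#|[set j : 'I_n | (j <= i)%N]| + #|[set j : 'I_n | (i <= j)%N]|)%N = n.+1.
Proof.
rewrite -cardsUI.
have -> : [set j : 'I_n | (j <= i)%N] :|: [set j : 'I_n | (i <= j)%N] = setT.
  by apply/setP => j; rewrite !inE leq_total.
have -> : [set j : 'I_n | (j <= i)%N] :&: [set j : 'I_n | (i <= j)%N] = [set i].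
  by apply/setP => j; rewrite !inE -eqn_leq.
by rewrite cardsT card_ord cards1 addn1.
Qed.

Lemma qnorm2_0 : qnorm2 (0 : quat) = 0.
Proof. by apply/eqP; rewrite qnorm2_eq0. Qed.

Lemma eig_final (s : 'S_n) (eps : R) :
  (2 <= n)%N -> qherm D -> offmax D < eps ->
  (forall i j : 'I_n, (i <= j)%N -> mu j <= mu i) ->
  (forall i j : 'I_n, (i <= j)%N -> qre (D (s j) (s j)) <= qre (D (s i) (s i))) ->
  \big[Num.max/0]_(i < n) `|mu i - qre (D (s i) (s i))|
     < Num.sqrt (n%:R * (n%:R - 1)) * eps.
Proof.
move=> n2 hD hm hmu_s hd_s.
set m := offmax D.
have m0 : 0 <= m := offmax_ge0 D.
have hn1 : 1 < n%:R :> R by rewrite ltr1n.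
have hn1' : 0 < n%:R - 1 :> R by rewrite subr_gt0.
have hsq : n%:R - 1 <= Num.sqrt (n%:R * (n%:R - 1)) :> R.
  rewrite -[X in X <= _](ger0_norm (ltW hn1')) -sqrtr_sqr ler_sqrt; last first.
    by rewrite mulr_ge0 // ltW // (lt_trans _ hn1).
  rewrite expr2 ler_wpM2r //; [exact: ltW | rewrite lerBlDr lerDl //].
have key : m * (n%:R - 1) < Num.sqrt (n%:R * (n%:R - 1)) * eps.
  apply: (@lt_le_trans _ _ (eps * (n%:R - 1))); first by rewrite ltr_pM2r.
  rewrite mulrC ler_wpM2r //; exact: le_trans m0 (ltW hm).
apply/bigmax_ltP; split.
  by apply: le_lt_trans key; rewrite mulr_ge0 // ltW.
move=> i _; apply: le_lt_trans key.
rewrite ler_norml; apply/andP; split.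
  have hc : (n < #|[set j : 'I_n | (i <= j)%N]| + #|s @: [set j : 'I_n | (j <= i)%N]|)%N.
    rewrite card_imset; last exact: perm_inj.
    by rewrite addnC card_split.
  have [a [y [hN [ha [hy [eqq eqv]]]]]] := common_qf hc.
  have h1 : \sum_j mu j * qnorm2 (a j 0) <= mu i * vn2 a.
    rewrite /vn2 mulr_sumr; apply: ler_sum => j _.
    case: (boolP (j \in [set j0 : 'I_n | (i <= j0)%N])) => hj.
      by rewrite ler_wpM2r ?qnorm2_ge0 //; apply: hmu_s; move: hj; rewrite inE.
    by rewrite ha // qnorm2_0 !mulr0.
  have h2 : qre (D (s i) (s i)) * vn2 a <= \sum_j qre (D j j) * qnorm2 (y j 0).
    rewrite -eqv /vn2 mulr_sumr; apply: ler_sum => j _.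
    case: (boolP (j \in s @: [set j0 : 'I_n | (j0 <= i)%N])) => hj.
      case/imsetP: hj => j' hj' ->; rewrite ler_wpM2r ?qnorm2_ge0 //.
      by apply: hd_s; move: hj'; rewrite inE.
    by rewrite hy // qnorm2_0 !mulr0.
  have := qf_bound y hD; rewrite eqv -/m ler_norml => /andP [h3 h4].
  rewrite -(ler_pM2r hN).
  move: h1 h2 h3 h4 eqq.
  move: (\sum_j mu j * qnorm2 (a j 0)) (\sum_j qre (D j j) * qnorm2 (y j 0)) (qf D y)
        (qre (D (s i) (s i))) (mu i) (vn2 a) => S1 S2 S3 di mi N *.
  lra.
have hc : (n < #|[set j : 'I_n | (j <= i)%N]| + #|s @: [set j : 'I_n | (i <= j)%N]|)%N.
  by rewrite card_imset ?card_split //; exact: perm_inj.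
have [a [y [hN [ha [hy [eqq eqv]]]]]] := common_qf hc.
have h1 : mu i * vn2 a <= \sum_j mu j * qnorm2 (a j 0).
  rewrite /vn2 mulr_sumr; apply: ler_sum => j _.
  case: (boolP (j \in [set j0 : 'I_n | (j0 <= i)%N])) => hj.
    by rewrite ler_wpM2r ?qnorm2_ge0 //; apply: hmu_s; move: hj; rewrite inE.
  by rewrite ha // qnorm2_0 !mulr0.
have h2 : \sum_j qre (D j j) * qnorm2 (y j 0) <= qre (D (s i) (s i)) * vn2 a.
  rewrite -eqv /vn2 mulr_sumr; apply: ler_sum => j _.
  case: (boolP (j \in s @: [set j0 : 'I_n | (i <= j0)%N])) => hj.
    case/imsetP: hj => j' hj' ->; rewrite ler_wpM2r ?qnorm2_ge0 //.
    by apply: hd_s; move: hj'; rewrite inE.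
  by rewrite hy // qnorm2_0 !mulr0.
have := qf_bound y hD; rewrite eqv -/m ler_norml => /andP [h3 h4].
  rewrite -(ler_pM2r hN).
move: h1 h2 h3 h4 eqq.
move: (\sum_j mu j * qnorm2 (a j 0)) (\sum_j qre (D j j) * qnorm2 (y j 0)) (qf D y)
      (qre (D (s i) (s i))) (mu i) (vn2 a) => S1 S2 S3 di mi N *.
lra.
Qed.
End Eig.

Section Main.
Variable R : realType.
Local Notation quat := (quat R).
Variables (n : nat) (Q : dqmx R n) (eps : R).
Hypotheses (hQ : qherm (dst Q)) (heps : 0 < eps).

Definition Inv (Qs : nat -> dqmx R n) t :=
  qherm (dst (Qs t)) /\ (exists V : 'M[quat]_n, qunit V /\ dst (Qs t) = qmxct V *m (dst Q *m V)) /\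
  off (dst (Qs t)) <= off (dst Q) - 2 * t%:R * eps ^+ 2.

Lemma inv_all (Qs : nat -> dqmx R n) : alg1_run Q eps Qs ->
  forall t, (forall u, (u < t)%N -> eps <= offmax (dst (Qs u))) -> Inv Qs t.
Proof.
case=> h0 hrun; elim=> [|t IH] hlt.
  rewrite /Inv h0; split=> //; split.
    exists 1%:M; split; first by rewrite /qunit qmxct1 mulmx1.
    by rewrite qmxct1 mul1mx mulmx1.
  by rewrite mulr0n mulr0 mul0r subr0.
have [hh [[V [hV eV]] hoff]] := IH (fun u hu => hlt u (ltnW hu)).
have ht := hlt t (ltnSn t).
have [k [l [kl [hkl eQ]]]] := hrun t ht.
set A := Qs t in hh eV hoff hkl eQ ht *.
have hc : eps ^+ 2 <= qnorm2 (dst A k l).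
  rewrite -qabs_sq hkl; have := qabs_ge0 (dst A k l); rewrite hkl => h.
  by rewrite ler_sqr ?nnegrE ?(ltW heps).
have cpos : 0 < qnorm2 (dst A k l) by apply: lt_le_trans hc; rewrite exprn_gt0.
have hst : dst (Qs t.+1) = qmxct (dst (givens A k l)) *m (dst A *m dst (givens A k l)).
  by rewrite eQ /= !qmxmulE.
split; first by rewrite hst; exact: herm_step.
split.
  exists (V *m dst (givens A k l)); split.
    by apply: qunit_mul => //; exact: givens_unit.
  by rewrite hst eV qmxct_mul !mulmxA.
rewrite hst off_step // -natr1; lra.
Qed.
End Main.

Unset Implicit Arguments.

Theorem theorem3p6 (R : realType) (n : nat) (Q : dqmx R n) (eps : R) :
  (2 <= n)%N -> dqhermitian Q -> 0 < eps ->
  exists N : nat, (0 < N)%N /\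
  forall Qs : nat -> dqmx R n, alg1_run Q eps Qs ->
  exists T : nat, (T <= N)%N /\
    (forall t : nat, (t < T)%N -> eps <= offmax (dst (Qs t))) /\
    offmax (dst (Qs T)) < eps /\
    forall (mu : 'I_n -> R) (s : 'S_n),
      (forall i j : 'I_n, (i <= j)%N -> mu j <= mu i) ->
      qeigenvalues (dst Q) mu ->
      (forall i j : 'I_n, (i <= j)%N ->
         qre (dst (Qs T) (s j) (s j)) <= qre (dst (Qs T) (s i) (s i))) ->
      \big[Num.max/0]_(i < n) `|mu i - qre (dst (Qs T) (s i) (s i))|
        < Num.sqrt (n%:R * (n%:R - 1)) * eps.
Proof.
move=> n2 hQ heps.
have hQ' : qherm (dst Q) by have := congr1 (@dst R n) hQ.
set c0 := off (dst Q).
exists (Num.truncn (c0 / (2 * eps ^+ 2))).+1; split => // Qs hrun.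
set N := (Num.truncn (c0 / (2 * eps ^+ 2))).+1.
have hex : exists t, (t <= N)%N && (offmax (dst (Qs t)) < eps).
  case: (boolP [exists t : 'I_N.+1, offmax (dst (Qs t)) < eps]) => [/existsP [t ht]|hno].
    by exists t; rewrite ht andbT -ltnS ltn_ord.
  exfalso.
  have hall u : (u < N)%N -> eps <= offmax (dst (Qs u)).
    move=> hu; have hu' : (u < N.+1)%N by apply: ltnW.
    by move/existsPn: hno => /(_ (Ordinal hu')) /=; rewrite leNgt.
  have [_ [_ hoff]] := inv_all hQ' heps hrun hall.
  have h0 := off_ge0 (dst (Qs N)).
  have hN := truncnS_gt (c0 / (2 * eps ^+ 2)).
  have he2 : 0 < 2 * eps ^+ 2 by rewrite mulr_gt0 // exprn_gt0.
  rewrite ltr_pdivrMr // -/N in hN.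
  rewrite /c0 in hN; lra.
case: (ex_minnP hex) => T /andP [hTN hTe] hmin.
have hallT u : (u < T)%N -> eps <= offmax (dst (Qs u)).
  move=> hu; rewrite leNgt; apply/negP => hue.
  have := hmin u; rewrite hue andbT (leq_trans (ltnW hu) hTN) => /(_ isT).
  by rewrite leqNgt hu.
exists T; split => //; split => //; split => //.
move=> mu s hmu [U [hUu hUd]] hd.
have [hh [[V [hV eV]] _]] := inv_all hQ' heps hrun hallT.
move: hd hTe hh; rewrite eV => hd hTe hh.
apply: (eig_final (U := U) (V := V)) => //.
- by apply/qunitaryE.
- by rewrite -!qmxmulE.
Qed.
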